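(* Let $\alpha>-1$, $n\ge1$ an integer, and $L_n^{(\alpha)}(x)=\binom{n+\alpha}{n}\,{}_1F_1\!\left(\begin{matrix}-n\\ \alpha+1\end{matrix};x\right)$ the classical Laguerre polynomial. Define for $i=0,1,2,\ldots$ $$b_i^*(\alpha,x)=\frac{1}{i!}\sum_{j=0}^i(-1)^j\binom{i}{j}(\alpha+1)_{i-j}x^j,\qquad c_i^*(\alpha,x)=\frac{(-1)^i}{i!}x^i .$$ Then, with $D=d/dx$, for $k=0,1,2$: $$\sum_{i=0}^\infty b_i^*(\alpha,x)D^{i+k}L_n^{(\alpha)}(x)=\frac{(-n)_k}{n\,\Gamma(k)}\quad(\text{i.e. }0,\,-1,\,n-1\text{ for }k=0,1,2),$$ and $$\sum_{i=0}^\infty c_i^*(\alpha,x)D^{i+k}L_n^{(\alpha)}(x)=\binom{n+\alpha}{n}\frac{(-n)_k}{(\alpha+1)_k}.$$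
   Context: $(a)_k$ is the Pochhammer symbol ($(a)_0=1$, $(a)_k=a(a+1)\cdots(a+k-1)$), $\binom{\gamma}{m}$ the generalized binomial coefficient, ${}_1F_1$ the confluent hypergeometric series $\sum_k\frac{(a)_k}{(b)_k}\frac{z^k}{k!}$. $1/\Gamma(0)$ is interpreted as $0$. The sums are finite since $L_n^{(\alpha)}$ is a polynomial of degree $n$. *)

(* Defs.v *)
From mathcomp Require Import all_boot all_order all_algebra.
Set Implicit Arguments. Unset Strict Implicit. Unset Printing Implicit Defensive.
Import Order.TTheory GRing.Theory Num.Theory.
Local Open Scope ring_scope.

Definition poch {R : pzRingType} (a : R) (k : nat) : R :=
  \prod_(i < k) (a + i%:R).

Definition gbinom {R : fieldType} (g : R) (m : nat) : R :=
  (\prod_(i < m) (g - i%:R)) / (m`!)%:R.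

(* Classical Laguerre polynomial
   L_n^(a)(x) = binom(n+a, n) * 1F1(-n; a+1; x)
              = binom(n+a, n) * sum_k (-n)_k / ((a+1)_k k!) x^k,
   the series terminating at k = n since (-n)_k = 0 for k > n. *)
Definition laguerre {R : fieldType} (n : nat) (a : R) : {poly R} :=
  \poly_(k < n.+1)
    (gbinom (n%:R + a) n * (poch (- n%:R) k / (poch (a + 1) k * (k`!)%:R))).

Definition bstar {R : fieldType} (a x : R) (i : nat) : R :=
  (i`!)%:R^-1 *
  \sum_(j < i.+1) ((-1) ^+ j * ('C(i, j))%:R * poch (a + 1) (i - j) * x ^+ j).

Definition cstar {R : fieldType} (x : R) (i : nat) : R :=
  (-1) ^+ i / (i`!)%:R * x ^+ i.

(* 1/Gamma(k) for natural k, with the convention 1/Gamma(0) = 0. *)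
Definition inv_gamma_nat {R : fieldType} (k : nat) : R :=
  if k is k'.+1 then (k'`!)%:R^-1 else 0.

(* Main.v *)
Require Import Defs.
From mathcomp Require Import all_boot all_order all_algebra.
From mathcomp Require Import ring lra.
Import Order.TTheory GRing.Theory Num.Theory.
Local Open Scope ring_scope.

Section S.
Variable R : realFieldType.

Lemma deriv0_const (p : {poly R}) x : p^`() = 0 -> p.[x] = p.[0].
Proof.
move=> dp; have -> : p = (p`_0)%:P.
  apply/polyP => -[|i]; rewrite coefC //=.
  have /eqP := congr1 (fun q : {poly R} => q`_i) dp.
  by rewrite coef_deriv coef0 mulrn_eq0 /= => /eqP.
by rewrite !hornerC.
Qed.

Lemma telesc (B Q : nat -> {poly R}) N :
  (B 0)^`() = 0 -> (forall i, (B i.+1)^`() = - B i) ->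
  (forall i, (Q i)^`() = Q i.+1) ->
  \sum_(i < N.+1) ((B i)^`() * Q i + B i * (Q i)^`()) = B N * Q N.+1.
Proof.
move=> B0 BS QS; elim: N => [|N IH].
  by rewrite big_ord_recl big_ord0 B0 QS mul0r add0r addr0.
rewrite big_ord_recr /= IH BS !QS; ring.
Qed.

Lemma sum_const (B Q : nat -> {poly R}) N x :
  (B 0)^`() = 0 -> (forall i, (B i.+1)^`() = - B i) ->
  (forall i, (Q i)^`() = Q i.+1) -> Q N = 0 ->
  (\sum_(i < N) B i * Q i).[x] = (\sum_(i < N) B i * Q i).[0].
Proof.
move=> B0 BS QS QN; apply: deriv0_const.
rewrite raddf_sum /=.
under eq_bigr do rewrite derivM.
case: N QN => [|N] QN; first by rewrite big_ord0.
by rewrite telesc // QN mulr0.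
Qed.

End S.

Section S.
Variable R : realFieldType.
Variable a : R.

Definition Bp (i : nat) : {poly R} :=
  \poly_(j < i.+1) ((i`!)%:R^-1 * ((-1) ^+ j * ('C(i, j))%:R * poch (a + 1) (i - j))).

Lemma fact_neq0 m : (m`!)%:R != 0 :> R.
Proof. by rewrite pnatr_eq0 -lt0n fact_gt0. Qed.

Lemma Bp0 : (Bp 0)^`() = 0.
Proof. by apply/polyP => j; rewrite coef_deriv coef_poly coef0 /= mul0rn. Qed.

Lemma BpS i : (Bp i.+1)^`() = - Bp i.
Proof.
apply/polyP => j; rewrite coef_deriv coefN !coef_poly ltnS.
case: ltnP => hj; last by rewrite mul0rn oppr0.
rewrite subSS -mulr_natr.
have h := mul_bin_diag i.+1 j; rewrite /= in h.
have hj1 : (j.+1)%:R != 0 :> R by rewrite pnatr_eq0.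
have e : ('C(i.+1, j.+1))%:R = (i.+1)%:R * ('C(i, j))%:R / (j.+1)%:R :> R.
  by apply: (mulIf hj1); rewrite mulfVK // -!natrM mulnC h.
rewrite e factS natrM exprS.
have := fact_neq0 i; have : (i.+1)%:R != 0 :> R by rewrite pnatr_eq0.
move=> h1 h2; field; rewrite !(addrC 1) !natr1 h2 hj1 h1 //.
Qed.

Lemma Bp_x i x : (Bp i).[x] = bstar a x i.
Proof.
rewrite horner_poly /bstar mulr_sumr; apply: eq_bigr => j _; ring.
Qed.

Lemma Bp_0 i : (Bp i).[0] = (i`!)%:R^-1 * poch (a + 1) i.
Proof. by rewrite horner_coef0 coef_poly /= expr0 bin0 subn0 mul1r mul1r. Qed.

Definition Cp (i : nat) : {poly R} := ((-1) ^+ i / (i`!)%:R) *: 'X^i.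

Lemma Cp0 : (Cp 0)^`() = 0.
Proof. by rewrite /Cp derivZ derivXn mulr0n scaler0. Qed.

Lemma CpS i : (Cp i.+1)^`() = - Cp i.
Proof.
rewrite /Cp derivZ derivXn /= -scaler_nat scalerA -scaleNr; congr (_ *: _).
rewrite factS natrM invfM exprS.
have := fact_neq0 i; have : (i.+1)%:R != 0 :> R by rewrite pnatr_eq0.
move=> h1 h2; field; rewrite (addrC 1) natr1 h1 h2 //.
Qed.

Lemma Cp_x i x : (Cp i).[x] = cstar x i.
Proof. by rewrite /Cp hornerZ hornerXn. Qed.

Lemma Cp_0 i : (Cp i).[0] = (i == 0)%:R.
Proof. rewrite /Cp hornerZ hornerXn expr0n; case: i => [|i]; [by rewrite expr0 divr1 mulr1 | by rewrite mulr0]. Qed.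

End S.

Section S.
Variable R : realFieldType.

Lemma poch_recl (c : R) m : poch c m.+1 = c * poch (c + 1) m.
Proof.
rewrite /poch big_ord_recl addr0; congr (_ * _); apply: eq_bigr => i _.
by rewrite /bump /= -natr1; ring.
Qed.

Lemma poch_recr (c : R) m : poch c m.+1 = poch c m * (c + m%:R).
Proof. by rewrite /poch big_ord_recr. Qed.

Lemma poch_gt0 (c : R) m : 0 < c -> 0 < poch c m.
Proof.
move=> c0; rewrite /poch; apply: prodr_gt0 => i _.
by apply: ltr_wpDr; rewrite ?ler0n.
Qed.

Lemma poch_neq0 (c : R) m : 0 < c -> poch c m != 0.
Proof. by move=> c0; rewrite gt_eqF // poch_gt0. Qed.

Lemma poch_add (c : R) i k : poch c (i + k) = poch c i * poch (c + i%:R) k.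
Proof.
elim: k => [|k IH]; first by rewrite addn0 /poch big_ord0 mulr1.
by rewrite addnS !poch_recr IH natrD addrA mulrA.
Qed.

Lemma poch_neg (n m : nat) : poch (- n%:R : R) m = (-1) ^+ m * (n ^_ m)%:R.
Proof.
elim: m => [|m IH]; first by rewrite /poch big_ord0 expr0 mul1r.
rewrite poch_recr IH ffactnSr natrM exprS.
case: (leqP m n) => hm.
  rewrite natrB //; ring.
by rewrite (ffact_small hm) mulr0 !mul0r mulr0.
Qed.

Lemma ffact_add n k i : (n ^_ (k + i) = n ^_ k * (n - k) ^_ i)%N.
Proof.
elim: i => [|i IH]; first by rewrite addn0 ffactn0 muln1.
by rewrite addnS !ffactnSr IH subnDA mulnA.
Qed.

Definition f (N : nat) (c : R) :=
  \sum_(i < N.+1) (-1) ^+ i * ('C(N, i))%:R / (c + i%:R).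
Definition g (N : nat) (c : R) := (N`!)%:R / poch c N.+1.

Lemma fact_neq0' m : (m`!)%:R != 0 :> R.
Proof. by rewrite pnatr_eq0 -lt0n fact_gt0. Qed.

Lemma g_step N (c : R) : 0 < c -> g N c - g N (c + 1) = g N.+1 c.
Proof.
move=> c0; rewrite /g (poch_recl c N.+1) (poch_recl c N) (poch_recr (c + 1) N) factS natrM.
have h1 : c != 0 by rewrite gt_eqF.
have h2 : poch (c + 1) N != 0 by rewrite poch_neq0 // addr_gt0.
have h3 : c + 1 + N%:R != 0 by rewrite gt_eqF // ltr_wpDr ?ler0n // addr_gt0.
rewrite -natr1.
by field; rewrite h1 h2 h3.
Qed.

Lemma f_rec N (c : R) : f N.+1 c = f N c - f N (c + 1).
Proof.
have L1 : f N.+1 c = c^-1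
   - \sum_(i < N.+1) ((-1) ^+ i * ('C(N, i.+1))%:R / (c + (i.+1)%:R))
   - \sum_(i < N.+1) ((-1) ^+ i * ('C(N, i))%:R / (c + 1 + i%:R)).
  rewrite /f big_ord_recl /= expr0 bin0 mulr1n !mul1r addr0 -addrA; congr (_ + _).
  rewrite -opprD -big_split -sumrN; apply: eq_bigr => i _ /=.
  rewrite /bump /= add1n binS natrD exprS -!natr1 [i%:R + 1]addrC addrA; ring.
have L2 : f N c = c^-1
   - \sum_(i < N) ((-1) ^+ i * ('C(N, i.+1))%:R / (c + (i.+1)%:R)).
  rewrite /f big_ord_recl /= expr0 bin0 mulr1n !mul1r addr0; congr (_ + _).
  rewrite -sumrN; apply: eq_bigr => i _ /=.
  rewrite /bump /= add1n exprS; ring.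
rewrite L1 L2 big_ord_recr /= bin_small // mulr0 mul0r addr0 /f.
ring.
Qed.

Lemma f_g N (c : R) : 0 < c -> f N c = g N c.
Proof.
elim: N c => [|N IH] c c0.
  by rewrite /f /g big_ord1 /poch big_ord1 /= expr0 bin0 mul1r.
rewrite (f_rec N c) !IH ?addr_gt0 // g_step //.
Qed.

End S.

Section S.
Variable R : realFieldType.

Lemma coefL (n j : nat) (a : R) : (laguerre n a)`_j =
  gbinom (n%:R + a) n * (poch (- n%:R) j / (poch (a + 1) j * (j`!)%:R)).
Proof.
rewrite /laguerre coef_poly; case: ltnP => // hj.
by rewrite poch_neg ffact_small // mulr0 mul0r mulr0.
Qed.

Lemma G_eq (n : nat) (a : R) : gbinom (n%:R + a) n = poch (a + 1) n / (n`!)%:R.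
Proof.
rewrite /gbinom /poch; congr (_ / _).
rewrite (reindex_inj rev_ord_inj) /=; apply: eq_bigr => i _.
rewrite natrB; last exact: ltn_ord.
rewrite -natr1; ring.
Qed.

Lemma sum_alt (n : nat) : (1 <= n)%N ->
  \sum_(i < n.+1) (-1) ^+ i * ('C(n, i))%:R = 0 :> R.
Proof.
move=> hn; have := exprDn (1 : R) (-1) n; rewrite subrr expr0n.
case: n hn => // n _ /= => e; apply: (etrans _ (esym e)); apply: eq_bigr => i _.
by rewrite expr1n mul1r mulr_natr.
Qed.

End S.

Section S.
Variable R : realFieldType.

Lemma term_eq (a : R) (n k i : nat) : 0 < a + 1 ->
  (i`!)%:R^-1 * poch (a + 1) i *
   ((laguerre n a)`_(i + k) *+ (i + k)`!)
  = gbinom (n%:R + a) n * (-1) ^+ k * (n ^_ k)%:R *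
    ((-1) ^+ i * ('C(n - k, i))%:R / poch (a + 1 + i%:R) k).
Proof.
move=> c0.
rewrite coefL poch_neg poch_add addnC ffact_add -(bin_ffact (n - k) i) !natrM exprD -[_ *+ (k + i)`!]mulr_natr.
have h1 := fact_neq0' R i; have h2 := fact_neq0' R (k + i).
have h3 := @poch_neq0 R _ i c0.
have h4 : poch (a + 1 + i%:R) k != 0 by apply: poch_neq0; apply: ltr_wpDr; rewrite ?ler0n.
move: h1 h2 h3 h4.
move: (i`!)%:R ((k + i)`!)%:R (poch (a + 1) i) (poch (a + 1 + i%:R) k) => F1 F2 P1 P2 h1 h2 h3 h4.
move: (gbinom (n%:R + a) n) ((n ^_ k)%:R) ('C(n - k, i)%:R) ((-1) ^+ k) ((-1) ^+ i) => G X Y s1 s2.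
field; rewrite h1 h2 h3 h4 //.
Qed.

End S.

Theorem mainTheorem2 (R : realFieldType) (a : R) (n k : nat) (x : R) :
  -1 < a -> (1 <= n)%N -> (k <= 2)%N ->
  (\sum_(i < n.+1) bstar a x i * ((laguerre n a)^`(i + k)).[x]
     = poch (- n%:R) k / n%:R * inv_gamma_nat k)
  /\
  (\sum_(i < n.+1) cstar x i * ((laguerre n a)^`(i + k)).[x]
     = gbinom (n%:R + a) n * (poch (- n%:R) k / poch (a + 1) k)).
Proof.
move=> ha hn hk.
have c0 : 0 < a + 1 by lra.
set L := laguerre n a.
have QS : forall i, (L^`(i + k))^`() = L^`(i.+1 + k) by move=> i; rewrite addSn derivnS.
have QN : L^`(n.+1 + k) = 0.
  apply: derivn_poly0; apply: leq_trans (size_poly _ _) _; exact: leq_addr.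
have Q0 : forall i, (L^`(i + k)).[0] = L`_(i + k) *+ (i + k)`!.
  by move=> i; rewrite horner_coef0 coef_derivn addn0 ffactnn.
split.
  have -> : \sum_(i < n.+1) bstar a x i * (L^`(i + k)).[x] =
            (\sum_(i < n.+1) Bp R a i * L^`(i + k)).[x].
    by rewrite horner_sum; apply: eq_bigr => i _; rewrite hornerM Bp_x.
  rewrite (@sum_const R (Bp R a) (fun i => L^`(i + k)) n.+1 x (Bp0 R a) (BpS R a) QS QN) horner_sum.
  under eq_bigr do rewrite hornerM Bp_0 Q0.

  rewrite /L; clear L QS QN Q0; under eq_bigr do rewrite (@term_eq R a n k _ c0).
  rewrite -mulr_sumr.
  have poch0 : forall c : R, poch c 0 = 1 by move=> c; rewrite /poch big_ord0.
  have poch1 : forall c : R, poch c 1 = c by move=> c; rewrite /poch big_ord1 addr0.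
  have cN : forall i : nat, 0 < a + 1 + i%:R by move=> i; apply: ltr_wpDr; rewrite ?ler0n.
  rewrite G_eq poch_neg.
  case: k hk => [|[|[|//]]] _.
  - under eq_bigr do rewrite poch0 divr1 subn0.
    by rewrite sum_alt // mulr0 /= mulr0.
  - case: n hn => // m _.
    under eq_bigr do rewrite poch1 subn1 /=.
    rewrite big_ord_recr /= bin_small // mulr0 mul0r addr0.
    have -> : \sum_(i < m.+1) (-1) ^+ i * ('C(m, i))%:R / (a + 1 + i%:R) = f R m (a + 1) by [].
    rewrite f_g // /g /inv_gamma_nat ffactn1 factS natrM expr1.
    have h1 := @poch_neq0 R _ m.+1 c0. have h2 := fact_neq0' R m.
    have h3 : (m.+1)%:R != 0 :> R by rewrite pnatr_eq0.
    rewrite fact0 divr1.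
    move: h1 h2 h3; move: (poch (a + 1) m.+1) (m`!%:R) (m.+1%:R) => P F M h1 h2 h3.
    by field; rewrite h1 h2 h3.
  - case: n hn => // -[_|m _].
      by rewrite ffact_small // !mulr0 !mul0r.
    have e2 : forall i : nat, poch (a + 1 + i%:R) 2 = (a + 1 + i%:R) * (a + 1 + 1 + i%:R).
      by move=> i; rewrite poch_recr poch1; congr (_ * _); ring.
    under eq_bigr do rewrite e2 subn2 /=.
    rewrite big_ord_recr /= bin_small // mulr0 mul0r addr0.
    rewrite big_ord_recr /= bin_small // mulr0 mul0r addr0.
    have -> : \sum_(i < m.+1) (-1) ^+ i * ('C(m, i))%:R / ((a + 1 + i%:R) * (a + 1 + 1 + i%:R))
       = f R m (a + 1) - f R m (a + 1 + 1).
      rewrite /f -sumrB; apply: eq_bigr => i _.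
      have u1 := cN i.
      have -> : a + 1 + 1 + i%:R = (a + 1 + i%:R) + 1 by ring.
      have u2 : 0 < a + 1 + i%:R + 1 by rewrite addr_gt0.
      move: (a + 1 + i%:R) u1 u2 => U u1 u2.
      by field; rewrite !gt_eqF.
    rewrite -f_rec f_g // /g /inv_gamma_nat ffactSS ffactn1 !factS fact0 !natrM.
    have h1 := @poch_neq0 R _ m.+2 c0. have h2 := fact_neq0' R m.
    have h3 : (m.+1)%:R != 0 :> R by rewrite pnatr_eq0.
    have h4 : (m.+2)%:R != 0 :> R by rewrite pnatr_eq0.
    move: h1 h2 h3 h4; move: (poch (a + 1) m.+2) (m`!%:R) (m.+1%:R) (m.+2%:R) => P F M1 M2 h1 h2 h3 h4.
    by field; rewrite h1 h2 h3 h4.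
have -> : \sum_(i < n.+1) cstar x i * (L^`(i + k)).[x] =
          (\sum_(i < n.+1) Cp R i * L^`(i + k)).[x].
  by rewrite horner_sum; apply: eq_bigr => i _; rewrite hornerM Cp_x.
rewrite (@sum_const R (Cp R) (fun i => L^`(i + k)) n.+1 x (Cp0 R) (CpS R) QS QN) horner_sum.
rewrite big_ord_recl /= big1 ?addr0; last by move=> i _; rewrite hornerM Cp_0 mul0r.
rewrite hornerM Cp_0 mul1r Q0 add0n /L coefL -[_ *+ k`!]mulr_natr.
have h := fact_neq0' R k. have h1 := @poch_neq0 R _ k c0.
move: h h1; move: (k`!%:R) (poch (a + 1) k) => F P h h1.
by field; rewrite h h1.
Qed.
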